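(* Let $n\in\mathbb N$ and write $n=mp+c$ with $m\in\mathbb N_0$ and $0\le c<p$. Then the sign representation $\mathrm{sgn}(n)$ of $\mathfrak S_n$ is isomorphic to the signed Young module $Y((1^c)|(mp))$.
   Context: $F$ is a field of odd prime characteristic $p$; $\mathfrak S_n$ is the symmetric group on $\{1,\dots,n\}$. $(1^c)$ is the partition with $c$ parts equal to $1$, and $(mp)=p\cdot(m)$ (empty if $m=0$). For a pair $(\alpha|\beta)$ of partitions with $|\alpha|+|\beta|=n$ (the set of these is $\mathscr P^2(n)$), $M(\alpha|\beta)=\mathrm{Ind}_{\mathfrak S_\alpha\times\mathfrak S_\beta}^{\mathfrak S_n}(F\boxtimes\mathrm{sgn})$ with $\mathfrak S_\alpha$ the Young subgroup of $\{1,\dots,|\alpha|\}$ acting trivially and $\mathfrak S_\beta$ the Young subgroup of $\{|\alpha|+1,\dots,n\}$ acting by sign. Dominance: $(\lambda|\nu)\trianglerighteq(\alpha|\beta)$ iff for all $k\ge1$, $\sum_{i\le k}\lambda_i\ge\sum_{i\le k}\alpha_i$ and $|\lambda|+\sum_{i\le k}\nu_i\ge|\alpha|+\sum_{i\le k}\beta_i$. Signed Young module $Y(\lambda|p\mu)$ (partitions $\lambda,\mu$, $|\lambda|+p|\mu|=n$): the unique (up to isomorphism) indecomposable summand of $M(\lambda|p\mu)$ that is a summand of $M(\alpha|\beta)$, $(\alpha|\beta)\in\mathscr P^2(n)$, only if $(\lambda|p\mu)\trianglerighteq(\alpha|\beta)$. *)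

(* Defs.v *)
From HB Require Import structures.
From mathcomp Require Import all_boot all_order all_algebra all_fingroup.
From mathcomp Require Import mxrepresentation.
Unset Printing Implicit Defensive.
Import GRing.Theory.
Local Open Scope ring_scope.

Definition is_partition (s : seq nat) : bool :=
  sorted geq s && all (fun x => 0 < x)%N s.

Definition pdominates (lam nu al be : seq nat) : Prop :=
  forall k : nat, (0 < k)%N ->
    (sumn (take k al) <= sumn (take k lam))%N /\
    (sumn al + sumn (take k be) <= sumn lam + sumn (take k nu))%N.

Definition ones (c : nat) : seq nat := nseq c 1%N.
Definition pmul (p : nat) (mu : seq nat) : seq nat := map (muln p) mu.
Definition row_part (m : nat) : seq nat := if m is 0 then [::] else [:: m].

Definition Sym (n : nat) : {group 'S_n} := [set: 'S_n]%G.

Definition sgn_mx (F : fieldType) (n : nat) (g : 'S_n) : 'M[F]_1 :=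
  ((-1) ^+ (odd_perm g))%:M.

Lemma sgn_mx_repr (F : fieldType) (n : nat) : mx_repr (Sym n) (@sgn_mx F n).
Proof.
split; first by rewrite /sgn_mx odd_perm1 expr0.
move=> x y _ _; rewrite /sgn_mx odd_permM signr_addb -scalar_mxM.
by [].
Qed.

Definition sgn_repr (F : fieldType) (n : nat) : mx_representation F (Sym n) 1 :=
  MxRepresentation (sgn_mx_repr F n).

(* block index of point i for the composition s = al ++ be: blocks are the
   consecutive intervals of lengths s_1, s_2, ... *)
Definition blk (s : seq nat) (i : nat) : nat :=
  count (fun j => sumn (take j.+1 s) <= i)%N (iota 0 (size s)).

(* Young subgroup S_al x S_be: S_al on {1..|al|}, S_be on {|al|+1..n} *)
Definition young (n : nat) (al be : seq nat) : {set 'S_n} :=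
  [set g : 'S_n | [forall i : 'I_n, blk (al ++ be) (g i) == blk (al ++ be) i]].

(* the points on which S_be acts (0-based: |al| <= i) *)
Definition beta_pts (n : nat) (al : seq nat) : {set 'I_n} :=
  [set i : 'I_n | (sumn al <= i)%N].

(* the linear character F |x| sgn of S_al x S_be: sign of the S_be-component *)
Definition chi (F : fieldType) (n : nat) (al : seq nat) (h : 'S_n) : F :=
  (-1) ^+ (odd_perm (restr_perm (beta_pts n al) h)).

Definition ereg (F : fieldType) (n : nat) (x : 'S_n) : 'rV[F]_#|Sym n| :=
  delta_mx 0 (gring_index (Sym n) x).

(* e_H = sum_{h in H} chi(h) e_h ; the cyclic submodule of the regular module
   generated by e_H is Ind_H^G (chi), H = S_al x S_be. *)
Definition eYoung (F : fieldType) (n : nat) (al be : seq nat) : 'rV[F]_#|Sym n| :=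
  \sum_(h in young n al be) chi F n al h *: ereg F n h.

Definition Mperm (F : fieldType) (n : nat) (al be : seq nat) :=
  submod_repr (cyclic_mx_module (regular_repr F (Sym n)) (eYoung F n al be)).

Definition is_summand (F : fieldType) (gT : finGroupType) (G : {group gT})
    (d : nat) (rM : mx_representation F G d)
    (e : nat) (rY : mx_representation F G e) : Prop :=
  exists U : 'M[F]_d, exists modU : mxmodule rM U,
    (exists2 V : 'M[F]_d, mxmodule rM V &
       mxdirect (U + V) /\ (1%:M <= U + V)%MS)
    /\ mx_rsim (submod_repr modU) rY.
Arguments is_summand {F gT G d} rM {e} rY.

Definition indecomposable (F : fieldType) (gT : finGroupType) (G : {group gT})
    (e : nat) (rY : mx_representation F G e) : Prop :=
  (0 < e)%N /\
  forall U V : 'M[F]_e, mxmodule rY U -> mxmodule rY V ->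
    mxdirect (U + V) -> (1%:M <= U + V)%MS -> U = 0 \/ V = 0.
Arguments indecomposable {F gT G e} rY.

(* rY is (isomorphic to) the signed Young module Y(lam|p mu): by definition the
   unique (up to isomorphism) indecomposable summand of M(lam|p mu) which is a
   summand of M(al|be), (al|be) in P^2(n), only if (lam|p mu) dominates (al|be). *)
Definition is_signed_young (F : fieldType) (p n : nat) (lam mu : seq nat)
    (e : nat) (rY : mx_representation F (Sym n) e) : Prop :=
  [/\ indecomposable rY,
      is_summand (Mperm F n lam (pmul p mu)) rY &
      forall al be : seq nat, is_partition al -> is_partition be ->
        (sumn al + sumn be)%N = n ->
        is_summand (Mperm F n al be) rY -> pdominates lam (pmul p mu) al be].

Arguments is_signed_young F p n lam mu {e} rY.

(* Main.v *)
Require Import Defs.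
From HB Require Import structures.
From mathcomp Require Import all_boot all_order all_algebra all_fingroup.
From mathcomp Require Import mxrepresentation zify.
Set Implicit Arguments. Unset Strict Implicit.

Lemma sumn_take_le (s : seq nat) j j' : (j <= j')%N ->
  (sumn (take j s) <= sumn (take j' s))%N.
Proof.
move=> le; rewrite -(take_takel s le) -{2}(cat_take_drop j (take j' s)) sumn_cat.
exact: leq_addr.
Qed.

Lemma blk_ge s i k : (k <= size s)%N -> (sumn (take k s) <= i)%N -> (k <= blk s i)%N.
Proof.
move=> ks hk; rewrite /blk -(subnKC ks) iotaD count_cat add0n.
apply: (leq_trans _ (leq_addr _ _)).
rewrite (@eq_in_count _ _ predT) ?count_predT ?size_iota //.
move=> j; rewrite mem_iota add0n => /andP[_ jk] /=.
exact: leq_trans (sumn_take_le s jk) hk.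
Qed.

Lemma blk_le s i k : (k < size s)%N -> (i < sumn (take k.+1 s))%N -> (blk s i <= k)%N.
Proof.
move=> ks hk; rewrite /blk -(subnKC (ltnW ks)) iotaD count_cat add0n.
rewrite (@eq_in_count _ _ pred0 (iota k _)) ?count_pred0 ?addn0.
  by apply: leq_trans (count_size _ _) _; rewrite size_iota.
move=> j; rewrite mem_iota => /andP[kj _] /=.
apply/negbTE; rewrite -ltnNge; apply: leq_trans hk _.
exact: sumn_take_le.
Qed.

Lemma beta_blk al be i : (sumn al <= i)%N = (size al <= blk (al ++ be) i)%N.
Proof.
apply/idP/idP => h.
  by apply: blk_ge; rewrite ?size_cat ?leq_addr // take_size_cat.
apply/negP => /negP; rewrite -ltnNge => hi.
have : (0 < size al)%N by case: al hi h => //.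
case e: (size al) => [//|k] _.
have k1 : (k < size (al ++ be))%N by rewrite size_cat e leq_addr.
have k2 : (i < sumn (take k.+1 (al ++ be)))%N by rewrite -e take_size_cat.
have := blk_le k1 k2; rewrite e in h.
by move=> /(leq_trans h); rewrite ltnn.
Qed.

Lemma young_group_set n al be : group_set (young n al be).
Proof.
apply/group_setP; split.
  by rewrite inE; apply/forallP => i; rewrite perm1.
move=> x y; rewrite !inE => /forallP hx /forallP hy; apply/forallP => i.
by rewrite permM (eqP (hy (x i))) (eqP (hx i)).
Qed.

Canonical young_group n al be := Group (young_group_set n al be).

Lemma sumn_take_nseq a (be : seq nat) k : (k <= a)%N ->
  sumn (take k (nseq a 1%N ++ be)) = k.
Proof.
move=> ka; rewrite take_cat size_nseq.
case: ltnP => hk.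
  by rewrite take_nseq ?(ltnW hk) // sumn_nseq mul1n.
have -> : k = a by apply/eqP; rewrite eqn_leq ka hk.
by rewrite subnn take0 cats0 sumn_nseq mul1n.
Qed.

Lemma blk_ones_lt a be i : (i < a)%N -> blk (nseq a 1%N ++ be) i = i.
Proof.
move=> ia; apply/eqP; rewrite eqn_leq; apply/andP; split.
  apply: blk_le; first by rewrite size_cat size_nseq (leq_trans ia) ?leq_addr.
  by rewrite sumn_take_nseq.
apply: blk_ge; first by rewrite size_cat size_nseq (leq_trans (ltnW ia)) ?leq_addr.
by rewrite sumn_take_nseq // ltnW.
Qed.

Lemma blk_ones_ge a be i : (a <= i)%N -> (a <= blk (nseq a 1%N ++ be) i)%N.
Proof.
move=> ia; apply: blk_ge; first by rewrite size_cat size_nseq leq_addr.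
by rewrite sumn_take_nseq.
Qed.

Lemma young_ones_perm_on n a be h : h \in young n (nseq a 1%N) be ->
  perm_on [set i : 'I_n | (a <= i)%N] h.
Proof.
rewrite inE => /forallP hh; apply/subsetP => i; rewrite !inE; apply: contraR.
rewrite -ltnNge => ia; have := hh i; rewrite (blk_ones_lt _ ia).
case: (ltnP (h i) a) => hia.
  by rewrite (blk_ones_lt _ hia) => /eqP e; apply/eqP/val_inj.
move/eqP => e; have := blk_ones_ge be hia; rewrite e => /(leq_trans ia).
by rewrite ltnn.
Qed.

Lemma blk_size s i : (blk s i <= size s)%N.
Proof. by rewrite /blk; apply: leq_trans (count_size _ _) _; rewrite size_iota. Qed.

Lemma blk_B n c p m i : n = (m * p + c)%N -> (c <= i)%N -> (i < n)%N ->
  blk (ones c ++ pmul p (row_part m)) i = c.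
Proof.
move=> hn ci ilt; apply/eqP; rewrite eqn_leq blk_ones_ge // andbT.
case: m hn => [|m] hn.
  by apply: leq_trans (blk_size _ _) _; rewrite /ones size_cat size_nseq addn0.
apply: blk_le; first by rewrite /ones size_cat size_nseq /= addn1.
rewrite take_oversize; last by rewrite /ones size_cat size_nseq /= addn1.
by rewrite sumn_cat sumn_nseq mul1n /= addn0 addnC mulnC -hn.
Qed.

Lemma young_B n c p m : n = (m * p + c)%N ->
  young n (ones c) (pmul p (row_part m)) = perm.Sym [set i : 'I_n | (c <= i)%N].
Proof.
move=> hn; apply/setP => g; rewrite [RHS]inE; apply/idP/idP.
  exact: young_ones_perm_on.
move=> pg; rewrite inE; apply/forallP => i.
case: (ltnP i c) => ic.
  by rewrite (out_perm pg) // inE -ltnNge.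
have gi : (c <= g i)%N by have := perm_closed i pg; rewrite !inE ic.
by rewrite !(blk_B hn) ?ltn_ord.
Qed.

Lemma young_norm n al be h : h \in young n al be ->
  h \in ('N(beta_pts n al | 'P))%g.
Proof.
rewrite inE => /forallP hh; apply/astabsP => x /=.
by rewrite !inE !(beta_blk al be) (eqP (hh x)).
Qed.

Lemma chiM (F : fieldType) n al be h1 h2 :
  h1 \in young n al be -> h2 \in young n al be ->
  chi F n al (h1 * h2)%g = (chi F n al h1 * chi F n al h2)%R.
Proof.
move=> y1 y2; rewrite /chi morphM /=.
- by rewrite (@odd_permM _ (restr_perm _ h1)) GRing.signr_addb.
- exact: young_norm y1.
- exact: young_norm y2.
Qed.

Lemma head_ge2 (F : fieldType) n x al be : (2 <= x)%N ->
  (sumn (x :: al) + sumn be)%N = n ->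
  exists2 t, t \in young n (x :: al) be &
     chi F n (x :: al) t = 1%R /\ odd_perm t.
Proof.
move=> x2 hn.
have n1 : (1 < n)%N by rewrite -hn /= -addnA (leq_trans x2) ?leq_addr.
pose i0 := Ordinal (ltnW n1); pose i1 := Ordinal n1.
have blk0 j : (j < 2)%N -> blk ((x :: al) ++ be) j = 0%N.
  move=> j2; rewrite /blk (@eq_in_count _ _ pred0) ?count_pred0 //.
  move=> k _ /=; apply/negbTE; rewrite -ltnNge.
  by apply: leq_trans j2 (leq_trans x2 (leq_addr _ _)).
exists (tperm i0 i1); last split.
- rewrite inE; apply/forallP => j.
  case: (tpermP i0 i1 j) => [->|->|_ _] //; rewrite !blk0 //.
- rewrite /chi; set S := beta_pts _ _.
  have -> : restr_perm S (tperm i0 i1) = 1%g.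
    apply: mker; rewrite ker_restr_perm; apply/astabP => j.
    move=> hj; apply: tpermD; apply/eqP => e; move: hj; rewrite -e inE /=;
    apply/negP; rewrite -ltnNge;
    exact: (leq_trans _ (leq_trans x2 (leq_addr _ _))).
  by rewrite odd_perm1.
- by rewrite odd_tperm.
Qed.

Lemma card_geq n c : #|[set i : 'I_n | (c <= i)%N]| = (n - c)%N.
Proof.
have -> : #|[set i : 'I_n | (c <= i)%N]| = count (fun i : nat => (c <= i)%N) (iota 0 n).
  rewrite cardsE /= cardE /enum_mem size_filter -val_enum_ord count_map enumT.
  by apply: eq_count.
case: (leqP c n) => cn.
  rewrite -(subnKC cn) iotaD count_cat add0n.
  rewrite (@eq_in_count _ _ pred0 (iota 0 c)) ?count_pred0; last first.
    by move=> j; rewrite mem_iota add0n => /andP[_ jc] /=; rewrite leqNgt jc.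
  rewrite (@eq_in_count _ _ predT) ?count_predT ?size_iota ?addKn //.
  by move=> j; rewrite mem_iota => /andP[-> _].
rewrite (@eq_in_count _ _ pred0) ?count_pred0; last first.
  by move=> j; rewrite mem_iota add0n => /andP[_ jn] /=; rewrite leqNgt (ltn_trans jn cn).
by apply/esym/eqP; rewrite subn_eq0 ltnW.
Qed.

Lemma ffact_dvd n a k : (k < a)%N -> ((n - k) %| n ^_ a)%N.
Proof.
elim: a n k => [//|a IH] n [|k] ka.
  by rewrite ffactnS subn0 dvdn_mulr.
rewrite ffactnS subnS -subn1 subnAC subn1; apply: dvdn_mull; exact: IH.
Qed.

Lemma ffact_ndvd p m c j : prime p -> (j <= c)%N -> (c < p)%N ->
  ~~ (p %| (m * p + c) ^_ j)%N.
Proof.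
move=> pp; elim: j c => [|j IH] c jc cp.
  by rewrite ffactn0 dvdn1 neq_ltn prime_gt1 ?orbT.
have c0 : (0 < c)%N by apply: leq_trans jc.
rewrite ffactnS Euclid_dvdM // negb_or; apply/andP; split.
  rewrite dvdn_addr ?dvdn_mull //; apply/negP => /dvdn_leq => /(_ c0).
  by rewrite leqNgt cp.
have -> : (m * p + c).-1 = (m * p + c.-1)%N by rewrite -subn1 -addnBA // subn1.
apply: IH; first by rewrite -ltnS prednK.
by apply: leq_ltn_trans cp; apply: leq_pred.
Qed.

Lemma card_SymG n : #|Defs.Sym n| = n`!.
Proof. by rewrite /Defs.Sym /= cardsT card_Sn. Qed.

Lemma index_geq n c : (c <= n)%N ->
  (#|Defs.Sym n : perm.Sym [set i : 'I_n | (c <= i)%N]|)%g = n ^_ c.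
Proof.
move=> cn.
have := Lagrange (subsetT (perm.Sym_group [set i : 'I_n | (c <= i)%N])).
rewrite /= card_Sym card_geq cardsT card_Sn -(ffact_fact cn) mulnC.
move/eqP; rewrite eqn_pmul2r ?fact_gt0 // => /eqP <-.
by [].
Qed.

Lemma index_C n a be p m c : prime p -> (a <= n)%N -> n = (m * p + c)%N ->
  (0 < m)%N -> (c < a)%N ->
  (p %| #|Defs.Sym n : young n (nseq a 1%N) be|%g)%N.
Proof.
move=> pp an hn m0 ca.
have HK : young_group n (nseq a 1%N) be \subset perm.Sym_group [set i : 'I_n | (a <= i)%N].
  by apply/subsetP => h hh; rewrite inE; apply: young_ones_perm_on hh.
have := Lagrange_index (subsetT (perm.Sym_group [set i : 'I_n | (a <= i)%N])) HK.
rewrite /= => <-; apply: dvdn_mulr; rewrite (index_geq an).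
apply: dvdn_trans (ffact_dvd n ca).
by rewrite hn addnK dvdn_mull.
Qed.

Import GRing.Theory.
Local Open Scope ring_scope.

Definition coef (F : fieldType) n (v : 'rV[F]_#|Defs.Sym n|) (x : 'S_n) : F :=
  v 0 (gring_index (Defs.Sym n) x).

Lemma inSym n (x : 'S_n) : x \in Defs.Sym n.
Proof. by rewrite inE. Qed.

Lemma gidx_inj n : injective (gring_index (Defs.Sym n)).
Proof.
move=> x y e; rewrite -(gring_indexK x (inSym x)) -(gring_indexK y (inSym y)).
by rewrite e.
Qed.

Lemma coef_ereg (F : fieldType) n (x y : 'S_n) :
  coef (ereg F n x) y = (x == y)%:R.
Proof.
by rewrite /coef /ereg mxE eqxx /= (inj_eq (@gidx_inj n)) eq_sym.
Qed.

Lemma coef_inj (F : fieldType) n (v w : 'rV[F]_#|Defs.Sym n|) :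
  (forall x, coef v x = coef w x) -> v = w.
Proof.
move=> h; apply/rowP => j; have := h (enum_val j).
by rewrite /coef gring_valK.
Qed.

Lemma coefD (F : fieldType) n (v w : 'rV[F]_#|Defs.Sym n|) x :
  coef (v + w) x = coef v x + coef w x.
Proof. by rewrite /coef mxE. Qed.

Lemma coefZ (F : fieldType) n (a : F) (v : 'rV[F]_#|Defs.Sym n|) x :
  coef (a *: v) x = a * coef v x.
Proof. by rewrite /coef mxE. Qed.

Lemma coef_sum (F : fieldType) n (I : finType) (P : pred I)
    (v : I -> 'rV[F]_#|Defs.Sym n|) x :
  coef (\sum_(i | P i) v i) x = \sum_(i | P i) coef (v i) x.
Proof. by rewrite /coef summxE. Qed.

Lemma coef_R (F : fieldType) n (v : 'rV[F]_#|Defs.Sym n|) (g y : 'S_n) :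
  coef (v *m regular_repr F (Defs.Sym n) g) y = coef v (y * g^-1)%g.
Proof.
rewrite /coef mxE (bigD1 (gring_index (Defs.Sym n) (y * g^-1)%g)) //=.
rewrite big1 ?addr0.
  rewrite /= /regular_mx mxE mxE eqxx /= gring_indexK ?inSym //.
  by rewrite -mulgA mulVg mulg1 eqxx mulr1.
move=> i ne; rewrite /regular_mx mxE mxE /=.
case: eqP => [e|]; last by rewrite mulr0.
case/negP: ne; apply/eqP.
have e2 := gidx_inj e.
by rewrite e2 -mulgA mulgV mulg1 gring_valK.
Qed.

Definition sgnF (F : fieldType) n (x : 'S_n) : F := (-1) ^+ odd_perm x.

Definition trv n (H : {group 'S_n}) : {set 'S_n} :=
  transversal (rcosets H (Defs.Sym n)) (Defs.Sym n).

Lemma trans_uniq (F : fieldType) n (H : {group 'S_n}) (x : 'S_n) :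
  \sum_(t in trv H) (((x * t^-1)%g \in H)%:R : F) = 1.
Proof.
have tr := transversalP (rcosets_partition (subsetT H)).
case/and3P: tr => _ _ /forall_inP /(_ (H :* x)%g) hB.
have Bin : (H :* x)%g \in rcosets H (Defs.Sym n).
  by rewrite mem_rcosets mulSGid ?subsetT ?inE.
have {hB Bin} /eqP hB := hB Bin.
transitivity (\sum_(t in trv H | t \in (H :* x)%g) (1 : F)).
  rewrite big_mkcondr /=; apply: eq_bigr => t _.
  by rewrite mem_rcoset -(groupV H) invMg invgK; case: (_ \in _).
rewrite sumr_const; rewrite -[RHS](mulr1n 1); congr (_ *+ _).
rewrite -[RHS]hB /trv; apply: eq_card => t; by rewrite !inE.
Qed.

Lemma sgnFM (F : fieldType) n (x y : 'S_n) : sgnF F (x * y)%g = sgnF F x * sgnF F y.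
Proof. by rewrite /sgnF odd_permM signr_addb. Qed.

Lemma sgnF_sq (F : fieldType) n (x : 'S_n) : sgnF F x * sgnF F x = 1.
Proof. by rewrite /sgnF; case: (odd_perm x); rewrite ?mulrNN mulr1. Qed.

Lemma trans_avg (F : fieldType) n (H : {group 'S_n}) (phi : 'S_n -> F) :
  (forall h x, h \in H -> phi (h * x)%g = phi x) ->
  forall y, \sum_(t in trv H) phi (t * y)%g = \sum_(t in trv H) phi t.
Proof.
move=> inv y.
transitivity (\sum_(t in trv H) \sum_(t' in trv H)
    ((((t * y) * t'^-1)%g \in H)%:R * phi t')).
  apply: eq_bigr => t _.
  transitivity ((\sum_(t' in trv H) ((((t * y) * t'^-1)%g \in H)%:R : F))
     * phi (t * y)%g); first by rewrite trans_uniq mul1r.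
  rewrite mulr_suml.
  apply: eq_bigr => t' _; case hin: (_ \in H); last by rewrite !mul0r.
  by rewrite !mul1r -(inv _ t' hin) -mulgA mulVg mulg1.
rewrite exchange_big /=; apply: eq_bigr => t' _.
rewrite -mulr_suml -[RHS]mul1r; congr (_ * _).
transitivity (\sum_(t in trv H) ((((t' * y^-1) * t^-1)%g \in H)%:R : F));
  last exact: trans_uniq.
apply: eq_bigr => t _.
by rewrite -(groupV H) !invMg !invgK mulgA.
Qed.

Definition inL (F : fieldType) n (H : {set 'S_n}) (chi : 'S_n -> F)
   (v : 'rV[F]_#|Defs.Sym n|) :=
  forall h y, h \in H -> coef v (h * y)%g = chi h * coef v y.

Definition fr (F : fieldType) n (H : {group 'S_n}) (v : 'rV[F]_#|Defs.Sym n|) : F :=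
  \sum_(t in trv H) sgnF F t * coef v t.

Lemma fr_R (F : fieldType) n (H : {group 'S_n}) v g :
  inL H (@sgnF F n) v ->
  fr H (v *m regular_repr F (Defs.Sym n) g) = sgnF F g * fr H v.
Proof.
move=> hv; rewrite /fr mulr_sumr.
pose phi x := sgnF F x * coef v x.
have phiI h x : h \in H -> phi (h * x)%g = phi x.
  move=> hH; rewrite /phi hv // sgnFM mulrCA !mulrA sgnF_sq mul1r.
  by [].
under eq_bigr => t _ do rewrite coef_R.
transitivity (\sum_(t in trv H) sgnF F g * phi (t * g^-1)%g).
  apply: eq_bigr => t _; rewrite /phi mulrA; congr (_ * _).
  by rewrite mulrC -sgnFM -mulgA mulVg mulg1.
rewrite -mulr_sumr (trans_avg phiI) mulr_sumr //.
Qed.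

Definition zvec (F : fieldType) n : 'rV[F]_#|Defs.Sym n| :=
  \sum_(x : 'S_n) sgnF F x *: ereg F n x.

Lemma coef_zvec (F : fieldType) n (y : 'S_n) : coef (zvec F n) y = sgnF F y.
Proof.
rewrite /zvec coef_sum (bigD1 y) //= big1 ?addr0; first by rewrite coefZ coef_ereg eqxx mulr1.
by move=> x ne; rewrite coefZ coef_ereg (negbTE ne) mulr0.
Qed.

Lemma coef_eYoung (F : fieldType) n al be x :
  coef (eYoung F n al be) x = if x \in young n al be then chi F n al x else 0.
Proof.
rewrite /eYoung coef_sum; case: ifP => hx.
  rewrite (bigD1 x) //= big1 ?addr0; first by rewrite coefZ coef_ereg eqxx mulr1.
  by move=> y /andP[_ ne]; rewrite coefZ coef_ereg (negbTE ne) mulr0.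
rewrite big1 // => y hy; rewrite coefZ coef_ereg; case: eqP => [e|]; last by rewrite mulr0.
by rewrite e hx in hy.
Qed.

Lemma z_trans (F : fieldType) n (H : {group 'S_n}) (e : 'rV[F]_#|Defs.Sym n|) :
  (forall x, coef e x = if x \in H then sgnF F x else 0) ->
  \sum_(t in trv H) sgnF F t *: (e *m regular_repr F (Defs.Sym n) t) = zvec F n.
Proof.
move=> he; apply: coef_inj => y; rewrite coef_zvec coef_sum.
under eq_bigr => t _ do rewrite coefZ coef_R he.
transitivity (\sum_(t in trv H) sgnF F y * (((y * t^-1)%g \in H)%:R : F)).
  apply: eq_bigr => t _; case: ifP => _; last by rewrite !mulr0.
  by rewrite mulr1 sgnFM mulrCA /sgnF odd_permV -/(sgnF F t) sgnF_sq mulr1.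
by rewrite -mulr_sumr trans_uniq mulr1.
Qed.

Lemma inL_cyclic (F : fieldType) n (H : {group 'S_n}) (chi : 'S_n -> F)
   (e : 'rV[F]_#|Defs.Sym n|) v :
  (forall h1 h2, h1 \in H -> h2 \in H -> chi (h1 * h2)%g = chi h1 * chi h2) ->
  (forall x, coef e x = if x \in H then chi x else 0) ->
  (v <= cyclic_mx (regular_repr F (Defs.Sym n)) e)%MS -> inL H chi v.
Proof.
move=> chiM he /cyclic_mxP[A /envelop_mxP[a ->] ->] h y hH.
rewrite !mulmx_sumr !coef_sum mulr_sumr; apply: eq_bigr => x _.
rewrite -!scalemxAr !coefZ !coef_R !he mulrCA; congr (_ * _).
rewrite -mulgA (groupMl _ hH); case: ifP => hy; last by rewrite mulr0.
by rewrite chiM.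
Qed.

Definition fcol (F : fieldType) n (H : {group 'S_n}) : 'cV[F]_#|Defs.Sym n| :=
  \col_j (if enum_val j \in trv H then sgnF F (enum_val j) else 0).

Lemma sum_idx (F : fieldType) n (f : 'I_#|Defs.Sym n| -> F) :
  \sum_j f j = \sum_(x : 'S_n) f (gring_index (Defs.Sym n) x).
Proof.
rewrite (reindex (gring_index (Defs.Sym n))) //.
exists enum_val => [x _|j _]; last exact: gring_valK.
exact: gring_indexK (inSym x).
Qed.

Lemma fcolE (F : fieldType) n (H : {group 'S_n}) v :
  (v *m fcol F H) 0 0 = fr H v.
Proof.
rewrite mxE sum_idx /fr [RHS]big_mkcond /=; apply: eq_bigr => x _.
rewrite /fcol mxE gring_indexK ?inSym //; case: ifP => _; last by rewrite mulr0.
by rewrite mulrC.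
Qed.

Lemma zvecR (F : fieldType) n g :
  zvec F n *m regular_repr F (Defs.Sym n) g = sgnF F g *: zvec F n.
Proof.
apply: coef_inj => y; rewrite coef_R coefZ !coef_zvec sgnFM /sgnF odd_permV.
by rewrite mulrC.
Qed.

Lemma zvec_neq0 (F : fieldType) n : zvec F n != 0.
Proof.
apply/negP => /eqP e; have := coef_zvec F (1%g : 'S_n); rewrite e /coef mxE /sgnF odd_perm1.
by move/eqP; rewrite eq_sym oner_eq0.
Qed.

Lemma fr_zvec (F : fieldType) n (H : {group 'S_n}) : fr H (zvec F n) = #|trv H|%:R.
Proof.
rewrite /fr; under eq_bigr => t _ do rewrite coef_zvec sgnF_sq.
by rewrite sumr_const.
Qed.

Lemma summand_lemma (F : fieldType) n (H : {group 'S_n}) (e : 'rV[F]_#|Defs.Sym n|) :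
  (forall x, coef e x = if x \in H then sgnF F x else 0) ->
  (#|trv H|%:R : F) != 0 ->
  is_summand (submod_repr (cyclic_mx_module (regular_repr F (Defs.Sym n)) e))
    (sgn_repr F n).
Proof.
move=> he hT.
set R := regular_repr F (Defs.Sym n).
set W := cyclic_mx R e.
set modW := cyclic_mx_module R e.
set rM := submod_repr modW.
have Lin v : (v <= W)%MS -> inL H (@sgnF F n) v.
  by apply: inL_cyclic => //; move=> *; apply: sgnFM.
have eW : (e <= W)%MS by apply: cyclic_mx_id.
have zW : (zvec F n <= W)%MS.
  rewrite -(z_trans he); apply: summx_sub => t _; apply: scalemx_sub.
  by apply: mxmodule_trans => //; rewrite inSym.
set zz := in_submod W (zvec F n).
have vzz : val_submod zz = zvec F n by rewrite in_submodK.
have zzR g : zz *m rM g = sgnF F g *: zz.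
  by rewrite -in_submodJ // zvecR linearZ.
have zz0 : zz != 0.
  by apply/negP => /eqP e0; have := zvec_neq0 F n; rewrite -vzz e0 linear0 eqxx.
set Phi := val_submod (1%:M : 'M_(\rank W)) *m fcol F H.
have PhiE (y : 'rV_(\rank W)) : (y *m Phi) 0 0 = fr H (val_submod y).
  by rewrite /Phi mulmxA -val_submodE fcolE.
have PhiR g (y : 'rV_(\rank W)) : y *m rM g *m Phi = sgnF F g *: (y *m Phi).
  apply/matrixP => i j; rewrite [i]ord1 [j]ord1 [RHS]mxE !PhiE.
  rewrite /rM /= val_submodJ ?inSym // fr_R //; apply: Lin; exact: val_submodP.
set V := kermx Phi.
have m11 (A : 'M[F]_1) : A 0 0 = 0 -> A = 0.
  by move=> h; apply/matrixP=> i j; rewrite [i]ord1 [j]ord1 h mxE.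
have RPhi g : rM g *m Phi = sgnF F g *: Phi.
  apply/row_matrixP => i; rewrite row_mul !rowE -scalemxAr.
  by rewrite PhiR.
have modV : mxmodule rM V.
  apply/mxmoduleP => g _; rewrite sub_kermx -mulmxA RPhi -scalemxAr.
  by rewrite mulmx_ker scaler0.
set U := <<zz>>%MS.
have modU : mxmodule rM U.
  apply/mxmoduleP => g _.
  by rewrite genmxE (eqmxMr _ (genmxE zz)) zzR scalemx_sub.
have frz : fr H (val_submod zz) = #|trv H|%:R by rewrite vzz fr_zvec.
exists U, modU; split.
  exists V => //; split.
    apply/mxdirect_addsP; apply/eqP; rewrite -submx0; apply/row_subP => i.
    set r := row i (U :&: V)%MS.
    have rU : (r <= U)%MS by exact: submx_trans (row_sub i _) (capmxSl U V).
    rewrite genmxE in rU.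
    have rV : (r <= V)%MS by exact: submx_trans (row_sub i _) (capmxSr U V).
    case/submxP: rU => D rD.
    move: rV; rewrite sub_kermx rD -mulmxA => /eqP hD.
    have : (D *m (zz *m Phi)) 0 0 = 0 by rewrite hD mxE.
    rewrite mxE big_ord1 PhiE frz => /eqP; rewrite mulf_eq0 (negbTE hT) orbF.
    by move/eqP => D0; rewrite (m11 D D0) mul0mx sub0mx.
  apply/row_subP => i; set y := row i 1%:M.
  pose b := fr H (val_submod y) / #|trv H|%:R.
  have -> : y = b *: zz + (y - b *: zz) by rewrite addrC subrK.
  apply: addmx_sub_adds; first by rewrite genmxE scalemx_sub.
  rewrite sub_kermx mulmxBl -scalemxAl; apply/eqP/m11.
  have subE (A B : 'M[F]_1) : (A - B) 0 0 = A 0 0 - B 0 0 by rewrite !mxE.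
  have scE a (A : 'M[F]_1) : (a *: A) 0 0 = a * A 0 0 by rewrite !mxE.
  rewrite subE scE !PhiE frz /b mulfVK //.
  by rewrite subrr.
have rU1 : \rank U = 1%N by rewrite genmxE rank_rV zz0.
have sU m (X : 'M_(m, \rank W)) g : (X <= U)%MS -> X *m rM g = sgnF F g *: X.
  rewrite genmxE => /submxP[D ->]; rewrite -(mulmxA D zz) zzR -scalemxAr //.
have i0 : 'I_(\rank U) by rewrite rU1; exact: ord0.
apply: (@MxReprSim _ _ _ _ _ _ _ (const_mx 1 : 'M[F]_(\rank U, 1))) => //.
  have rB : \rank (const_mx 1 : 'M[F]_(\rank U, 1)) = 1%N.
    apply/eqP; rewrite eqn_leq rank_leq_col lt0n mxrank_eq0.
    apply/negP => /eqP/matrixP/(_ i0 0); rewrite !mxE => /eqP; by rewrite oner_eq0.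
  by rewrite /row_free rB rU1.
move=> g _; rewrite /= /submod_mx sU ?val_submodP // in_submodE -scalemxAl -in_submodE val_submodK.
by rewrite /sgn_mx mul_mx_scalar -scalemxAl mul1mx.
Qed.

Lemma not_summand (F : fieldType) n (H : {group 'S_n}) (chi : 'S_n -> F)
    (e : 'rV[F]_#|Defs.Sym n|) :
  (forall h1 h2, h1 \in H -> h2 \in H -> chi (h1 * h2)%g = chi h1 * chi h2) ->
  (forall x, coef e x = if x \in H then chi x else 0) ->
  is_summand (submod_repr (cyclic_mx_module (regular_repr F (Defs.Sym n)) e))
    (sgn_repr F n) ->
  (forall h, h \in H -> chi h = sgnF F h) /\ (#|trv H|%:R : F) != 0.
Proof.
move=> chiM he [U [modU [[V modV [dir full]] rsim]]].
set R := regular_repr F (Defs.Sym n).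
set W := cyclic_mx R e.
set modW := cyclic_mx_module R e.
set rM := submod_repr modW.
have Lin v : (v <= W)%MS -> inL H chi v by apply: inL_cyclic.
case: rsim => B rU1 freeB hom.
set rU := submod_repr modU.
have rUg g : rU g = sgnF F g *: 1%:M.
  case/row_freeP: freeB => B' BB'.
  rewrite -[rU g]mulmx1 -BB' mulmxA hom ?inSym //= /sgn_mx mul_mx_scalar.
  by rewrite -scalemxAl BB'.
have sU (u : 'rV_(\rank W)) g : (u <= U)%MS -> u *m rM g = sgnF F g *: u.
  move=> uU; rewrite -(in_submodK uU) -val_submodJ ?inSym // rUg.
  by rewrite -scalemxAr mulmx1 val_submodE -scalemxAl -val_submodE.
have [i ri] : exists i, row i U != 0.
  case: (pickP (fun i => row i U != 0)) => [i ri|h]; first by exists i.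
  have U0 : U = 0.
    by apply/row_matrixP => i; move/negbFE: (h i) => /eqP ->; rewrite row0.
  by move: rU1; rewrite U0 mxrank0.
set y := row i U.
have yU : (y <= U)%MS by apply: row_sub.
set w := val_submod y.
have wW : (w <= W)%MS by apply: val_submodP.
have wR g : w *m R g = sgnF F g *: w.
  by rewrite -val_submodJ ?inSym // sU // val_submodE -scalemxAl -val_submodE.
have w0 : w != 0 by rewrite val_submod_eq0.
set lam := coef w 1%g.
have cw x : coef w x = sgnF F x * lam.
  have := coef_R w x x; rewrite wR coefZ mulgV -/lam => <-.
  by rewrite mulrA sgnF_sq mul1r.
have lam0 : lam != 0.
  apply/negP => /eqP l0; case/negP: w0; apply/eqP; apply: coef_inj => x.
  by rewrite cw l0 mulr0 /coef mxE.
have wz : w = lam *: zvec F n.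
  by apply: coef_inj => x; rewrite cw coefZ coef_zvec mulrC.
have zW : (zvec F n <= W)%MS.
  have -> : zvec F n = lam^-1 *: w by rewrite wz scalerA mulVf // scale1r.
  exact: scalemx_sub.
have chis h : h \in H -> chi h = sgnF F h.
  move=> hH; have := Lin _ zW h 1%g hH; rewrite mulg1 !coef_zvec.
  by rewrite /sgnF odd_perm1 expr0 mulr1 => ->.
split => //; apply/negP => /eqP T0.
have he' x : coef e x = if x \in H then sgnF F x else 0.
  by rewrite he; case: ifP => // /chis.
set zz := in_submod W (zvec F n).
have zzy : zz = lam^-1 *: y.
  rewrite /zz (_ : zvec F n = lam^-1 *: w); last by rewrite wz scalerA mulVf // scale1r.
  by rewrite in_submodE -scalemxAl -in_submodE val_submodK.
have zz0 : zz != 0.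
  by rewrite zzy scaler_eq0 invr_eq0 (negbTE lam0).
have zzU : (zz <= U)%MS by rewrite zzy scalemx_sub.
set E := in_submod W e.
have eW : (e <= W)%MS by apply: cyclic_mx_id.
have EUV : (E <= U + V)%MS by apply: submx_trans (submx1 E) full.
case/sub_addsmxP: EUV => [[a b] /= Eab].
have zzE : zz = \sum_(t in trv H) sgnF F t *: (E *m rM t).
  rewrite /zz -(z_trans he') in_submodE mulmx_suml; apply: eq_bigr => t _.
  by rewrite -scalemxAl -in_submodE in_submodJ ?inSym.
have zzV : (zz <= V)%MS.
  rewrite zzE Eab.
  have -> : \sum_(t in trv H) sgnF F t *: ((a *m U + b *m V) *m rM t) =
      \sum_(t in trv H) (a *m U + sgnF F t *: (b *m V *m rM t)).
    apply: eq_bigr => t _; rewrite mulmxDl scalerDr sU ?submxMl //.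
    by rewrite scalerA sgnF_sq scale1r.
  rewrite big_split /= sumr_const -scaler_nat T0 scale0r add0r.
  apply: summx_sub => t _; apply: scalemx_sub.
  by apply: mxmodule_trans; rewrite ?inSym ?submxMl.
have : (zz <= U :&: V)%MS by rewrite sub_capmx zzU zzV.
by move/mxdirect_addsP: dir => ->; rewrite submx0 (negbTE zz0).
Qed.

Lemma sgn_indec (F : fieldType) n : indecomposable (sgn_repr F n).
Proof.
split => // U V _ _ /mxdirect_addsP dir _.
have := mxrank_disjoint_sum dir; have := rank_leq_col (U + V)%MS => le e.
rewrite e in le.
case: (eqVneq U 0) => [->|U0]; first by left.
right; apply/eqP; rewrite -mxrank_eq0; move: le; rewrite -mxrank_eq0 in U0.
by move: U0; case: (\rank U) => [|[|]] //; case: (\rank V).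
Qed.

Lemma chi_B (F : fieldType) n c h :
  h \in perm.Sym [set i : 'I_n | (c <= i)%N] -> chi F n (ones c) h = sgnF F h.
Proof.
rewrite inE => ph.
have eb : beta_pts n (ones c) = [set i : 'I_n | (c <= i)%N].
  by apply/setP => i; rewrite !inE /ones sumn_nseq mul1n.
rewrite /chi eb.
have -> : restr_perm [set i : 'I_n | (c <= i)%N] h = h.
  apply/permP => x; case: (boolP (x \in [set i : 'I_n | (c <= i)%N])) => hx.
    rewrite restr_permE //; apply/astabsP => y /=; exact: perm_closed.
  by rewrite !(out_perm _ hx) // restr_perm_on.
by [].
Qed.

Lemma card_trv n (H : {group 'S_n}) : #|trv H| = #|Defs.Sym n : H|%g.
Proof.
by rewrite /trv (card_transversal (transversalP (rcosets_partition (subsetT H)))).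
Qed.

Lemma sumn_take_ones a k : sumn (take k (nseq a 1%N)) = minn k a.
Proof.
case: (leqP k a) => ka.
  by rewrite take_nseq // sumn_nseq mul1n.
rewrite take_oversize ?sumn_nseq ?mul1n // size_nseq; exact: ltnW.
Qed.
Local Close Scope ring_scope.
Unset Implicit Arguments.

Theorem lemma5p4 (F : fieldType) (p : nat) (p_prime : prime p) (p_odd : odd p)
    (charF : p \in [pchar F]%R) (n m c : nat) (n_gt0 : (0 < n)%N)
    (c_lt_p : (c < p)%N) (n_eq : n = (m * p + c)%N) :
  is_signed_young F p n (ones c) (row_part m) (sgn_repr F n).
Proof.
split; first exact: sgn_indec.
  have HB := young_B n_eq.
  apply: (@summand_lemma F n (young_group n (ones c) (pmul p (row_part m)))).
    move=> x; rewrite coef_eYoung; case: ifP => // hx; apply: chi_B.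
    by rewrite -HB.
  have cn : (c <= n)%N by rewrite n_eq leq_addl.
  rewrite -(dvdn_pcharf charF) card_trv /= HB (index_geq cn) n_eq.
  exact: ffact_ndvd.
move=> al be pal pbe hs hsum.
have [chis hT] := not_summand (@chiM F n al be) (@coef_eYoung F n al be) hsum.
case/andP: pal => sal pos.
have le1 : all (fun x => x <= 1)%N al.
  case: al sal pos hs chis hT {hsum} => [//|x0 al'] /= sal pos hs chis hT.
  have x01 : (x0 <= 1)%N.
    rewrite leqNgt; apply/negP => x2.
    have [t ty [c1 ot]] := head_ge2 F x2 hs.
    have := chis t ty; rewrite c1 /sgnF ot expr1 => /eqP.
    rewrite -subr_eq0 opprK -(natrD F 1 1) -(dvdn_pcharf charF) => d2.
    have := @dvdn_leq p (1 + 1) isT d2; rewrite leq_eqVlt ltnS => /orP[/eqP p2|].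
      by rewrite p2 in p_odd.
    by rewrite leqNgt prime_gt1.
  rewrite x01 /=; apply/allP => y yal.
  have := allP (order_path_min (leT:=geq) _ sal) y yal.
  move=> /(_ _) h; apply: leq_trans x01; apply: h.
  by move=> a b d ab bd; apply: leq_trans bd ab.
have eal : al = nseq (size al) 1%N.
  apply/all_pred1P/allP => x xal; have := allP le1 x xal; have := allP pos x xal.
  by rewrite /= eqn_leq => -> ->.
set a := size al.
have hs' : (a + sumn be)%N = n by rewrite -hs eal sumn_nseq mul1n.
have ac : (a <= c)%N.
  rewrite leqNgt; apply/negP => ca.
  case: m n_eq => [|m'] n_eq'.
    by move: hs' ca; rewrite n_eq' /=; lia.
  have an : (a <= n)%N by rewrite -hs' leq_addr.
  have := index_C be p_prime an n_eq' (isT : (0 < m'.+1)%N) ca.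
  rewrite -eal -card_trv (dvdn_pcharf charF) => T0.
  by rewrite T0 in hT.
move=> k k0; rewrite eal sumn_take_ones /ones sumn_take_ones; split.
  by lia.
rewrite !sumn_nseq !mul1n.
have : (sumn (take k be) <= sumn be)%N.
  by rewrite -{2}(cat_take_drop k be) sumn_cat leq_addr.
move: hs'; rewrite /a => hs'.
case: m n_eq => [|m'] n_eq' /=.
  by rewrite n_eq' /= in hs'; lia.
case: k k0 => [//|k] _ /=; rewrite n_eq' in hs'; nia.
Qed.
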